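(* Let $K\subseteq\mathbb{R}$ be a cubic number field having exactly one real embedding, and let $\alpha,\beta\in K$. Then there exists a strictly increasing sequence $(\psi_n)_{n\ge1}$ of positive integers such that $\lim_{n\to\infty}\psi_n\|\psi_n\alpha\|\,\|\psi_n\beta\|=0$.
   Context: For $x\in\mathbb{R}$, $\|x\|$ denotes the distance from $x$ to the nearest integer. *)

(* Defs.v *)
From Stdlib Require Import Reals QArith Qreals.
Open Scope R_scope.

(* ||x|| : distance from x to the nearest integer.
   Int_part x is floor x (IZR (Int_part x) <= x < IZR (Int_part x) + 1). *)
Definition dist_nint (x : R) : R :=
  let f := x - IZR (Int_part x) in Rmin f (1 - f).

Definition in_Q_theta3 (theta x : R) : Prop :=
  exists q0 q1 q2 : Q, x = Q2R q0 + Q2R q1 * theta + Q2R q2 * theta ^ 2.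

(* theta has degree exactly 3 over Q: 1, theta, theta^2 are Q-linearly
   independent and theta is a root of the monic rational cubic
   X^3 + a X^2 + b X + c (which is then its minimal polynomial). *)
Definition cubic_min_poly (theta : R) (a b c : Q) : Prop :=
  theta ^ 3 + Q2R a * theta ^ 2 + Q2R b * theta + Q2R c = 0 /\
  (forall q0 q1 q2 : Q,
      Q2R q0 + Q2R q1 * theta + Q2R q2 * theta ^ 2 = 0 ->
      Q2R q0 = 0 /\ Q2R q1 = 0 /\ Q2R q2 = 0).

(* The real embeddings of Q(theta) correspond to the real roots of the
   minimal polynomial; exactly one real embedding means theta is its only
   real root. *)
Definition only_real_root (theta : R) (a b c : Q) : Prop :=
  forall x : R, x ^ 3 + Q2R a * x ^ 2 + Q2R b * x + Q2R c = 0 -> x = theta.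

(* Main.v *)
Require Import Defs.
From Stdlib Require Import Reals QArith Qreals Lra Lia ZArith List Arith ClassicalEpsilon.
Open Scope R_scope.

Lemma php : forall n (f : nat -> nat), (forall i, (i <= n)%nat -> (f i < n)%nat) ->
  exists i j, (i < j <= n)%nat /\ f i = f j.
Proof.
  induction n as [|n IH]; intros f Hf.
  - specialize (Hf 0%nat (le_n 0)). lia.
  - destruct (Classical_Prop.classic (exists i, (i <= n)%nat /\ f i = f (S n))) as [[i [Hi Hei]]|Hn].
    + exists i, (S n). split; [lia| exact Hei].
    + set (g := fun i => if (f i <? f (S n))%nat then f i else (f i - 1)%nat).
      destruct (IH g) as [i [j [Hij Hg]]].
      * intros i Hi. unfold g. assert (H1 := Hf i ltac:(lia)). assert (H2 := Hf (S n) ltac:(lia)).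
        assert (f i <> f (S n)) by (intro; apply Hn; exists i; split; auto).
        destruct (Nat.ltb_spec (f i) (f (S n))); lia.
      * exists i, j. split; [lia|]. unfold g in Hg.
        assert (f i <> f (S n)) by (intro; apply Hn; exists i; split; [lia|auto]).
        assert (f j <> f (S n)) by (intro; apply Hn; exists j; split; [lia|auto]).
        destruct (Nat.ltb_spec (f i) (f (S n))); destruct (Nat.ltb_spec (f j) (f (S n))); lia.
Qed.

Record O := mkO { o0 : Z; o1 : Z; o2 : Z }.

Definition mulO (p q r : Z) (x y : O) : O :=
  let c0 := (o0 x * o0 y)%Z in
  let c1 := (o0 x * o1 y + o1 x * o0 y)%Z in
  let c2 := (o0 x * o2 y + o1 x * o1 y + o2 x * o0 y)%Z in
  let c3 := (o1 x * o2 y + o2 x * o1 y)%Z in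
  let c4 := (o2 x * o2 y)%Z in
  mkO (c0 + r * c3 + p * r * c4)%Z (c1 + q * c3 + (p * q + r) * c4)%Z
      (c2 + p * c3 + (p * p + q) * c4)%Z.

(* multiplication matrix columns: x, x*eta, x*eta^2 *)
Definition m00 (x : O) := o0 x.
Definition m10 (x : O) := o1 x.
Definition m20 (x : O) := o2 x.
Definition m01 (p q r : Z) (x : O) := (r * o2 x)%Z.
Definition m11 (p q r : Z) (x : O) := (o0 x + q * o2 x)%Z.
Definition m21 (p q r : Z) (x : O) := (o1 x + p * o2 x)%Z.
Definition m02 (p q r : Z) (x : O) := (r * o1 x + p * r * o2 x)%Z.
Definition m12 (p q r : Z) (x : O) := (q * o1 x + (p * q + r) * o2 x)%Z.
Definition m22 (p q r : Z) (x : O) := (o0 x + p * o1 x + (p * p + q) * o2 x)%Z.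

Definition normO p q r x : Z :=
  (m00 x * (m11 p q r x * m22 p q r x - m12 p q r x * m21 p q r x)
 - m01 p q r x * (m10 x * m22 p q r x - m12 p q r x * m20 x)
 + m02 p q r x * (m10 x * m21 p q r x - m11 p q r x * m20 x))%Z.

(* adjugate first column: cofactors of first row *)
Definition adjO p q r x : O :=
  mkO (m11 p q r x * m22 p q r x - m12 p q r x * m21 p q r x)%Z
      (- (m10 x * m22 p q r x - m12 p q r x * m20 x))%Z
      (m10 x * m21 p q r x - m11 p q r x * m20 x)%Z.

Lemma mul_adj p q r x : mulO p q r x (adjO p q r x) = mkO (normO p q r x) 0 0.
Proof.
  destruct x as [a b c]. unfold mulO, adjO, normO, m00,m10,m20,m01,m11,m21,m02,m12,m22; simpl.
  f_equal; ring.
Qed.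

Definition ev (eta : R) (x : O) : R := IZR (o0 x) + IZR (o1 x) * eta + IZR (o2 x) * eta ^ 2.
Definition reC (u v : R) (x : O) : R := IZR (o0 x) + IZR (o1 x) * u + IZR (o2 x) * (u ^ 2 - v ^ 2).
Definition imC (u v : R) (x : O) : R := IZR (o1 x) * v + IZR (o2 x) * (2 * u * v).

Definition Rel (p q r : Z) (eta u v : R) : Prop :=
  IZR p = eta + 2 * u /\ IZR q = - (2 * u * eta + u ^ 2 + v ^ 2) /\ IZR r = eta * (u ^ 2 + v ^ 2).

Ltac pushZ := repeat (rewrite ?plus_IZR, ?mult_IZR, ?minus_IZR, ?opp_IZR).

Lemma ev_mul p q r eta u v (H : Rel p q r eta u v) x y :
  ev eta (mulO p q r x y) = ev eta x * ev eta y.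
Proof.
  destruct H as [Hp [Hq Hr]]. destruct x as [a b c], y as [d e f].
  unfold ev, mulO; simpl. pushZ. rewrite Hp, Hq, Hr. ring.
Qed.

Lemma reC_mul p q r eta u v (H : Rel p q r eta u v) x y :
  reC u v (mulO p q r x y) = reC u v x * reC u v y - imC u v x * imC u v y.
Proof.
  destruct H as [Hp [Hq Hr]]. destruct x as [a b c], y as [d e f].
  unfold reC, imC, mulO; simpl. pushZ. rewrite Hp, Hq, Hr. ring.
Qed.

Lemma imC_mul p q r eta u v (H : Rel p q r eta u v) x y :
  imC u v (mulO p q r x y) = reC u v x * imC u v y + imC u v x * reC u v y.
Proof.
  destruct H as [Hp [Hq Hr]]. destruct x as [a b c], y as [d e f].
  unfold reC, imC, mulO; simpl. pushZ. rewrite Hp, Hq, Hr. ring.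
Qed.

Lemma norm_eq p q r eta u v (H : Rel p q r eta u v) x :
  IZR (normO p q r x) = ev eta x * (reC u v x ^ 2 + imC u v x ^ 2).
Proof.
  destruct H as [Hp [Hq Hr]]. destruct x as [a b c].
  unfold normO, ev, reC, imC, m00,m10,m20,m01,m11,m21,m02,m12,m22; simpl. pushZ. rewrite Hp, Hq, Hr. ring.
Qed.

Definition trO (p q : Z) (x : O) : Z := (3 * o0 x + p * o1 x + (p * p + 2 * q) * o2 x)%Z.

Lemma tr_eq p q r eta u v (H : Rel p q r eta u v) x :
  IZR (trO p q x) = ev eta x + 2 * reC u v x.
Proof.
  destruct H as [Hp [Hq Hr]]. destruct x as [a b c].
  unfold trO, ev, reC; cbn [o0 o1 o2]. pushZ. rewrite Hp, Hq. ring.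
Qed.

Definition Indep (eta : R) := forall z0 z1 z2 : Z,
  IZR z0 + IZR z1 * eta + IZR z2 * eta ^ 2 = 0 -> z0 = 0%Z /\ z1 = 0%Z /\ z2 = 0%Z.

Lemma Q2R_Z (z : Z) : Q2R (z # 1) = IZR z.
Proof. unfold Q2R; simpl. field. Qed.

Lemma Qden_pos (x : Q) : 0 < IZR (Z.pos (Qden x)).
Proof. apply IZR_lt. lia. Qed.

Lemma Q2R_eq (x : Q) : Q2R x * IZR (Z.pos (Qden x)) = IZR (Qnum x).
Proof. unfold Q2R. field. apply Rgt_not_eq, Qden_pos. Qed.

Lemma setup theta a b c (Hmin : cubic_min_poly theta a b c) (Hone : only_real_root theta a b c) :
  exists (d : positive) (p q r : Z) (u v : R),
    let eta := IZR (Z.pos d) * theta in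
    Rel p q r eta u v /\ 0 < v /\ Indep eta.
Proof.
  destruct Hmin as [Hroot Hind].
  set (da := Qden a). set (db := Qden b). set (dc := Qden c).
  set (d := (da * db * dc)%positive).
  set (eta := IZR (Z.pos d) * theta).
  assert (Hd : 0 < IZR (Z.pos d)) by (apply IZR_lt; lia).
  assert (Ha := Q2R_eq a). assert (Hb := Q2R_eq b). assert (Hc := Q2R_eq c).
  fold da in Ha. fold db in Hb. fold dc in Hc.
  assert (Hda := Qden_pos a). assert (Hdb := Qden_pos b). assert (Hdc := Qden_pos c).
  fold da in Hda. fold db in Hdb. fold dc in Hdc.
  set (p := (- (Qnum a * Z.pos db * Z.pos dc))%Z).
  set (q := (- (Qnum b * Z.pos da * Z.pos dc * Z.pos d))%Z).
  set (r := (- (Qnum c * Z.pos da * Z.pos db * Z.pos d * Z.pos d))%Z).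
  assert (Ed : IZR (Z.pos d) = IZR (Z.pos da) * IZR (Z.pos db) * IZR (Z.pos dc)).
  { unfold d. rewrite !Pos2Z.inj_mul, !mult_IZR. ring. }
  assert (Ep : IZR p = - IZR (Z.pos d) * Q2R a).
  { unfold p. pushZ. rewrite <- Ha, Ed. ring. }
  assert (Eq : IZR q = - IZR (Z.pos d) ^ 2 * Q2R b).
  { unfold q. pushZ. rewrite <- Hb, Ed. ring. }
  assert (Er : IZR r = - IZR (Z.pos d) ^ 3 * Q2R c).
  { unfold r. pushZ. rewrite <- Hc, Ed. ring. }
  assert (Hroot' : eta ^ 3 = IZR p * eta ^ 2 + IZR q * eta + IZR r).
  { rewrite Ep, Eq, Er. unfold eta.
    replace (Q2R c) with (- (theta ^ 3 + Q2R a * theta ^ 2 + Q2R b * theta)) by lra. ring. }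
  assert (Hindep : Indep eta).
  { intros z0 z1 z2 Hz.
    destruct (Hind (z0 # 1) ((z1 * Z.pos d) # 1) ((z2 * Z.pos d * Z.pos d) # 1)) as [H0 [H1 H2]].
    { rewrite !Q2R_Z. pushZ. rewrite <- Hz. unfold eta. ring. }
    rewrite Q2R_Z in H0, H1, H2. apply eq_IZR in H0, H1, H2. nia. }
  set (S := IZR p - eta). set (P := - IZR q - S * eta).
  assert (HrP : IZR r = eta * P) by (unfold P, S; nra).
  assert (Hfact : forall x, x ^ 3 - IZR p * x ^ 2 - IZR q * x - IZR r = (x - eta) * (x ^ 2 - S * x + P)).
  { intro x. rewrite HrP. unfold P, S. ring. }
  assert (Hscale : forall x, x ^ 3 - IZR p * x ^ 2 - IZR q * x - IZR r = 0 -> x = eta).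
  { intros x Hx. unfold eta. assert (Hx' : x / IZR (Z.pos d) = theta).
    { apply Hone. rewrite Ep, Eq, Er in Hx.
      apply Rmult_eq_reg_l with (IZR (Z.pos d) ^ 3); [| apply pow_nonzero; lra].
      rewrite Rmult_0_r, <- Hx. field. lra. }
    rewrite <- Hx'. field. lra. }
  assert (Hdisc : S ^ 2 - 4 * P < 0).
  { destruct (Rlt_or_le (S ^ 2 - 4 * P) 0) as [Hl|Hl]; [exact Hl|exfalso].
    set (w := sqrt (S ^ 2 - 4 * P)).
    assert (Hw : w * w = S ^ 2 - 4 * P) by (apply sqrt_sqrt; lra).
    assert (E1 : (S + w) / 2 = eta).
    { apply Hscale. rewrite Hfact. replace (((S + w) / 2) ^ 2 - S * ((S + w) / 2) + P) with ((w * w - (S^2 - 4 * P)) / 4) by field.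
      rewrite Hw. field. }
    assert (E2 : (S - w) / 2 = eta).
    { apply Hscale. rewrite Hfact. replace (((S - w) / 2) ^ 2 - S * ((S - w) / 2) + P) with ((w * w - (S^2 - 4 * P)) / 4) by field.
      rewrite Hw. field. }
    assert (Hp3 : IZR p + IZR (-3) * eta + IZR 0 * eta ^ 2 = 0).
    { unfold S in E1, E2. simpl IZR. lra. }
    destruct (Hindep _ _ _ Hp3) as [_ [H _]]. lia. }
  set (u := S / 2). set (v := sqrt (P - u ^ 2)).
  assert (Hv2 : v * v = P - u ^ 2) by (apply sqrt_sqrt; unfold u; nra).
  assert (Hvpos : 0 < v) by (apply sqrt_lt_R0; unfold u; nra).
  exists d, p, q, r, u, v. cbv zeta. fold eta.
  split; [|split; [exact Hvpos| exact Hindep]].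
  unfold Rel. split; [|split].
  - unfold u, S. field.
  - replace (v ^ 2) with (v * v) by ring. rewrite Hv2. unfold P, u. field.
  - replace (v ^ 2) with (v * v) by ring. rewrite Hv2, HrP. ring.
Qed.

Lemma denom theta (d : positive) alpha (Ha : in_Q_theta3 theta alpha) :
  exists (D : positive) (g : O), IZR (Z.pos D) * alpha = ev (IZR (Z.pos d) * theta) g.
Proof.
  destruct Ha as [q0 [q1 [q2 Ha]]].
  assert (H0 := Q2R_eq q0). assert (H1 := Q2R_eq q1). assert (H2 := Q2R_eq q2).
  assert (P0 := Qden_pos q0). assert (P1 := Qden_pos q1). assert (P2 := Qden_pos q2).
  exists (d * d * Qden q0 * Qden q1 * Qden q2)%positive.
  exists (mkO (Qnum q0 * Z.pos d * Z.pos d * Z.pos (Qden q1) * Z.pos (Qden q2))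
              (Qnum q1 * Z.pos d * Z.pos (Qden q0) * Z.pos (Qden q2))
              (Qnum q2 * Z.pos (Qden q0) * Z.pos (Qden q1)))%Z.
  unfold ev; cbn [o0 o1 o2]. rewrite Ha. rewrite !Pos2Z.inj_mul. pushZ.
  rewrite <- H0, <- H1, <- H2. field.
Qed.

Lemma abs_le_inv x b : Rabs x <= b -> - b <= x <= b.
Proof. intro H. pose proof (Rle_abs x). pose proof (Rle_abs (- x)). rewrite Rabs_Ropp in *. lra. Qed.

Lemma abs3 a b c t1 t2 H : Rabs a <= H -> Rabs b <= H -> Rabs c <= H ->
  Rabs (a + b * t1 + c * t2) <= H * (1 + Rabs t1 + Rabs t2).
Proof.
  intros Ha Hb Hc.
  eapply Rle_trans; [apply Rabs_triang|]. eapply Rle_trans; [apply Rplus_le_compat_r, Rabs_triang|].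
  rewrite !Rabs_mult.
  assert (0 <= Rabs t1) by apply Rabs_pos. assert (0 <= Rabs t2) by apply Rabs_pos.
  assert (Rabs b * Rabs t1 <= H * Rabs t1) by (apply Rmult_le_compat_r; lra).
  assert (Rabs c * Rabs t2 <= H * Rabs t2) by (apply Rmult_le_compat_r; lra).
  nra.
Qed.

Lemma pair_inj a b c d m : (a * m + b = c * m + d)%nat -> (b < m)%nat -> (d < m)%nat -> a = c /\ b = d.
Proof.
  intros E Hb Hd.
  assert (a = c).
  { destruct (Nat.lt_trichotomy a c) as [H|[H|H]]; [|exact H|]; exfalso.
    - assert (a * m + m <= c * m)%nat by (replace (a * m + m)%nat with (S a * m)%nat by ring; apply Nat.mul_le_mono_r; lia). lia.
    - assert (c * m + m <= a * m)%nat by (replace (c * m + m)%nat with (S c * m)%nat by ring; apply Nat.mul_le_mono_r; lia). lia. }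
  subst. lia.
Qed.

Lemma Int_part_close a b : Int_part a = Int_part b -> Rabs (a - b) < 1.
Proof.
  intro E. destruct (base_Int_part a) as [A1 A2]. destruct (base_Int_part b) as [B1 B2].
  rewrite E in A1, A2. apply Rabs_def1; lra.
Qed.

Lemma fact_div n k : (1 <= k <= n)%nat -> Nat.divide k (fact n).
Proof.
  induction n as [|n IH]; intros Hk; [lia|].
  destruct (Nat.eq_dec k (S n)) as [->|Hne].
  - simpl. exists (fact n). ring.
  - destruct (IH ltac:(lia)) as [w Hw]. exists (S n * w)%nat. simpl fact. rewrite Hw. ring.
Qed.

Lemma fact_pos n : (0 < fact n)%nat.
Proof. induction n; simpl; lia. Qed.

Definition cO u v x := reC u v x ^ 2 + imC u v x ^ 2.

Definition subO (x y : O) := mkO (o0 x - o0 y) (o1 x - o1 y) (o2 x - o2 y).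

Section Unit.
Variables (p q r : Z) (eta u v : R).
Hypothesis HR : Rel p q r eta u v.
Hypothesis Hv : 0 < v.
Hypothesis HI : Indep eta.

Lemma imC_zero x : imC u v x = 0 -> o1 x = 0%Z /\ o2 x = 0%Z.
Proof.
  destruct HR as [Hp _]. unfold imC. intro H.
  assert (H1 : IZR (o1 x) + IZR (o2 x) * (2 * u) = 0).
  { apply Rmult_eq_reg_r with v; [|lra]. lra. }
  destruct (Z.eq_dec (o2 x) 0) as [E|E].
  - rewrite E in H1. split; [apply eq_IZR; lra|exact E].
  - exfalso. assert (Hz : IZR (- (p * o2 x + o1 x)) + IZR (o2 x) * eta + IZR 0 * eta ^ 2 = 0).
    { pushZ. replace eta with (IZR p - 2 * u) by lra. nra. }
    destruct (HI _ _ _ Hz) as [_ [H2 _]]. exact (E H2).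
Qed.

Lemma cO_zero x : cO u v x = 0 -> x = mkO 0 0 0.
Proof.
  unfold cO. intro H.
  assert (Hre : reC u v x = 0) by nra. assert (Him : imC u v x = 0) by nra.
  destruct (imC_zero x Him) as [E1 E2]. unfold reC in Hre. rewrite E1, E2 in Hre.
  destruct x as [a b c]. simpl in *. subst. f_equal. apply eq_IZR. lra.
Qed.

Lemma ev_zero x : ev eta x = 0 -> x = mkO 0 0 0.
Proof.
  unfold ev. intro H. destruct (HI _ _ _ H) as [E0 [E1 E2]].
  destruct x as [a b c]; simpl in *; subst; reflexivity.
Qed.

Lemma cO_pos x : x <> mkO 0 0 0 -> 0 < cO u v x.
Proof.
  intro Hx. assert (0 <= cO u v x) by (unfold cO; nra).
  destruct (Rle_lt_or_eq_dec _ _ H) as [H'|H']; [exact H'|].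
  exfalso. apply Hx, cO_zero. auto.
Qed.

Lemma norm_nz x : x <> mkO 0 0 0 -> normO p q r x <> 0%Z.
Proof.
  intros Hx E. assert (E' := norm_eq p q r eta u v HR x). rewrite E in E'.
  assert (Hc := cO_pos x Hx). unfold cO in Hc.
  assert (ev eta x = 0).
  { apply Rmult_eq_reg_r with (reC u v x ^ 2 + imC u v x ^ 2); [|lra]. simpl IZR in E'. lra. }
  apply Hx, ev_zero; auto.
Qed.

Definition Bc := 1 + Rabs u + Rabs (u ^ 2 - v ^ 2) + Rabs v + Rabs (2 * u * v).
Definition Ke := 1 + Rabs eta + Rabs (eta ^ 2).

Lemma Bc_pos : 0 < Bc.
Proof. unfold Bc. pose proof (Rabs_pos u). pose proof (Rabs_pos (u^2-v^2)). pose proof (Rabs_pos v).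
  pose proof (Rabs_pos (2*u*v)). lra. Qed.

Lemma bnd_re x H : Rabs (IZR (o0 x)) <= H -> Rabs (IZR (o1 x)) <= H -> Rabs (IZR (o2 x)) <= H ->
  Rabs (reC u v x) <= Bc * H /\ Rabs (imC u v x) <= Bc * H /\ Rabs (ev eta x) <= Ke * H.
Proof.
  intros H0 H1 H2. assert (0 <= H) by (pose proof (Rabs_pos (IZR (o0 x))); lra).
  pose proof (Rabs_pos u). pose proof (Rabs_pos (u^2-v^2)). pose proof (Rabs_pos v).
  pose proof (Rabs_pos (2*u*v)).
  split; [|split].
  - unfold reC. eapply Rle_trans; [apply abs3; eauto|]. unfold Bc. nra.
  - unfold imC. replace (IZR (o1 x) * v + IZR (o2 x) * (2 * u * v)) with (0 + IZR (o1 x) * v + IZR (o2 x) * (2 * u * v)) by ring.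
    eapply Rle_trans; [apply abs3; eauto; rewrite Rabs_R0; lra|]. unfold Bc. nra.
  - unfold ev. eapply Rle_trans; [apply abs3; eauto|]. unfold Ke. nra.
Qed.

Lemma dec_inj m k k' : (0 < m)%nat -> (k mod m = k' mod m)%nat -> ((k / m) mod m = (k' / m) mod m)%nat ->
  (k / m / m = k' / m / m)%nat -> k = k'.
Proof.
  intros Hm E0 E1 E2.
  assert (Ek : (k / m = k' / m)%nat).
  { rewrite (Nat.div_mod_eq (k / m) m), (Nat.div_mod_eq (k' / m) m). lia. }
  rewrite (Nat.div_mod_eq k m), (Nat.div_mod_eq k' m). lia.
Qed.

Lemma idx_bound X BH w M : 0 < w -> 2 * BH / w = INR M -> Rabs X <= BH ->
  (0 <= Int_part ((X + BH) / w) <= Z.of_nat M)%Z.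
Proof.
  intros Hw HM HX. destruct (base_Int_part ((X + BH) / w)) as [A1 A2].
  assert (Hy0 : 0 <= (X + BH) / w). { apply Rmult_le_pos; [|left; apply Rinv_0_lt_compat; lra]. apply abs_le_inv in HX. lra. }
  assert (Hy1 : (X + BH) / w <= INR M).
  { rewrite <- HM. apply Rmult_le_compat_r; [left; apply Rinv_0_lt_compat; lra|]. apply abs_le_inv in HX. lra. }
  split.
  - assert (IZR (Int_part ((X + BH) / w)) > -1) by lra. apply lt_IZR in H. lia.
  - apply le_IZR. rewrite <- INR_IZR_INZ. lra.
Qed.

Lemma dirichlet : exists C0 : Z, forall rho, 0 < rho ->
  exists x, x <> mkO 0 0 0 /\ cO u v x < rho /\ (Z.abs (normO p q r x) <= C0)%Z.
Proof.
  pose proof Bc_pos as HB.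
  assert (HK : 0 <= Ke) by (unfold Ke; pose proof (Rabs_pos eta); pose proof (Rabs_pos (eta^2)); lra).
  exists (up (8 * Bc ^ 2 * Ke)). intros rho Hrho.
  destruct (archimed (8 * Bc ^ 2 * Ke)) as [HC0 _].
  set (z := 8 * Bc ^ 2 / rho).
  assert (Hz : 0 < z) by (unfold z; apply Rdiv_lt_0_compat; nra).
  destruct (archimed z) as [Hup _].
  set (s := S (Z.to_nat (up z))).
  assert (Hs : z < INR s).
  { unfold s. rewrite S_INR, INR_IZR_INZ, Z2Nat.id; [lra|]. apply le_IZR. lra. }
  assert (Hs1 : (1 <= s)%nat) by (unfold s; lia).
  assert (Hs1' : 1 <= INR s) by (apply (le_INR 1); lia).
  set (H := (s * s)%nat). set (M := (s * s * s)%nat). set (m := (H + 1)%nat).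
  set (n := ((M + 1) * (M + 1))%nat).
  set (dec := fun k => mkO (Z.of_nat (k mod m)) (Z.of_nat ((k / m) mod m)%nat) (Z.of_nat (k / m / m)%nat)).
  set (w := 2 * Bc / INR s).
  assert (Hw : 0 < w) by (unfold w; apply Rdiv_lt_0_compat; lra).
  set (BH := Bc * INR H).
  assert (HM : 2 * BH / w = INR M).
  { unfold BH, w, M, H. rewrite !mult_INR. field. lra. }
  set (idx := fun X => Z.to_nat (Int_part ((X + BH) / w))).
  set (key := fun k => (idx (reC u v (dec k)) * (M + 1) + idx (imC u v (dec k)))%nat).
  assert (Hm : (0 < m)%nat) by (unfold m; lia).
  assert (Hcoord : forall k, (k <= n)%nat ->
     (0 <= IZR (o0 (dec k)) <= INR H) /\ (0 <= IZR (o1 (dec k)) <= INR H) /\ (0 <= IZR (o2 (dec k)) <= INR H)).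
  { intros k Hk. assert (Hk' : (k < m * m * m)%nat).
    { unfold n, M, m, H in *. nia. }
    assert (k mod m < m)%nat by (apply Nat.mod_upper_bound; lia).
    assert ((k / m) mod m < m)%nat by (apply Nat.mod_upper_bound; lia).
    assert (k / m / m < m)%nat.
    { apply Nat.Div0.div_lt_upper_bound. apply Nat.Div0.div_lt_upper_bound. lia. }
    unfold dec; cbn [o0 o1 o2]. rewrite <- !INR_IZR_INZ.
    unfold m in *. repeat split; try apply pos_INR; apply le_INR; lia. }
  assert (Hrng : forall k, (k <= n)%nat -> Rabs (reC u v (dec k)) <= BH /\ Rabs (imC u v (dec k)) <= BH).
  { intros k Hk. destruct (Hcoord k Hk) as [A0 [A1 A2]].
    rewrite <- (Rabs_right (IZR (o0 (dec k)))) in A0 by lra.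
    rewrite <- (Rabs_right (IZR (o1 (dec k)))) in A1 by lra.
    rewrite <- (Rabs_right (IZR (o2 (dec k)))) in A2 by lra.
    destruct (bnd_re (dec k) (INR H) (proj2 A0) (proj2 A1) (proj2 A2)) as [R1 [R2 _]]. unfold BH; lra. }
  destruct (php n key) as [i [j [Hij Hkey]]].
  { intros k Hk. destruct (Hrng k Hk) as [R1 R2].
    destruct (idx_bound _ _ _ M Hw HM R1) as [I1 I2]. destruct (idx_bound _ _ _ M Hw HM R2) as [J1 J2].
    unfold key, idx, n. nia. }
  destruct (Hrng i ltac:(lia)) as [Ri1 Ri2]. destruct (Hrng j ltac:(lia)) as [Rj1 Rj2].
  destruct (idx_bound _ _ _ M Hw HM Ri1) as [I1 I2]. destruct (idx_bound _ _ _ M Hw HM Ri2) as [I3 I4].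
  destruct (idx_bound _ _ _ M Hw HM Rj1) as [I5 I6]. destruct (idx_bound _ _ _ M Hw HM Rj2) as [I7 I8].
  unfold key in Hkey. apply pair_inj in Hkey; [|unfold idx; lia|unfold idx; lia].
  destruct Hkey as [K1 K2]. unfold idx in K1, K2.
  apply Z2Nat.inj in K1; [|lia|lia]. apply Z2Nat.inj in K2; [|lia|lia].
  apply Int_part_close in K1. apply Int_part_close in K2.
  assert (Hclose : forall X Y, Rabs ((X + BH) / w - (Y + BH) / w) < 1 -> Rabs (X - Y) < w).
  { intros X Y HXY. replace ((X + BH) / w - (Y + BH) / w) with ((X - Y) / w) in HXY by (field; lra).
    unfold Rdiv in HXY. rewrite Rabs_mult, Rabs_inv, (Rabs_right w) in HXY by lra.
    apply Rmult_lt_reg_r with (/ w); [apply Rinv_0_lt_compat; lra|]. rewrite Rinv_r; lra. }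
  apply Hclose in K1. apply Hclose in K2.
  exists (subO (dec i) (dec j)).
  assert (Hre : reC u v (subO (dec i) (dec j)) = reC u v (dec i) - reC u v (dec j)).
  { unfold reC, subO; cbn [o0 o1 o2]. rewrite !minus_IZR. ring. }
  assert (Him : imC u v (subO (dec i) (dec j)) = imC u v (dec i) - imC u v (dec j)).
  { unfold imC, subO; cbn [o0 o1 o2]. rewrite !minus_IZR. ring. }
  assert (Hnz : subO (dec i) (dec j) <> mkO 0 0 0).
  { intro E. unfold subO, dec in E. injection E. intros E2 E1 E0.
    assert (i = j); [|lia].
    apply (dec_inj m); [exact Hm| |  |]; apply Nat2Z.inj, Zminus_eq; assumption. }
  assert (Hc : cO u v (subO (dec i) (dec j)) < 2 * w ^ 2).
  { unfold cO. rewrite Hre, Him.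
    pose proof (Rabs_pos (reC u v (dec i) - reC u v (dec j))).
    pose proof (Rabs_pos (imC u v (dec i) - imC u v (dec j))).
    assert (Rabs (reC u v (dec i) - reC u v (dec j)) ^ 2 < w ^ 2) by nra.
    assert (Rabs (imC u v (dec i) - imC u v (dec j)) ^ 2 < w ^ 2) by nra.
    rewrite !pow2_abs in *. lra. }
  assert (Hw2 : 2 * w ^ 2 = 8 * Bc ^ 2 / (INR s * INR s)) by (unfold w; field; lra).
  split; [exact Hnz|split].
  - eapply Rlt_trans; [exact Hc|]. rewrite Hw2.
    apply Rle_lt_trans with (8 * Bc ^ 2 / INR s).
    + apply Rmult_le_compat_l; [nra|]. apply Rinv_le_contravar; nra.
    + unfold z in Hs. apply (Rmult_lt_compat_r rho) in Hs; [|lra].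
      unfold Rdiv in *. rewrite Rmult_assoc, Rinv_l in Hs by lra.
      apply Rmult_lt_reg_r with (INR s); [lra|]. rewrite Rmult_assoc, Rinv_l by lra. lra.
  -
    assert (Hx : forall f : O -> Z, (f = o0 \/ f = o1 \/ f = o2) ->
       Rabs (IZR (f (subO (dec i) (dec j)))) <= INR H).
    { intros f Hf. destruct (Hcoord i ltac:(lia)) as [A0 [A1 A2]]. destruct (Hcoord j ltac:(lia)) as [B0 [B1 B2]].
      unfold subO; destruct Hf as [ -> | [ -> | -> ] ]; cbn [o0 o1 o2]; rewrite minus_IZR; apply Rabs_le; lra. }
    destruct (bnd_re (subO (dec i) (dec j)) (INR H) (Hx o0 (or_introl eq_refl))
       (Hx o1 (or_intror (or_introl eq_refl))) (Hx o2 (or_intror (or_intror eq_refl)))) as [_ [_ He]].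
    assert (HN : Rabs (IZR (normO p q r (subO (dec i) (dec j)))) <= 8 * Bc ^ 2 * Ke).
    { rewrite (norm_eq p q r eta u v HR). fold (cO u v (subO (dec i) (dec j))).
      rewrite Rabs_mult, (Rabs_right (cO _ _ _)) by (unfold cO; nra).
      assert (0 <= cO u v (subO (dec i) (dec j))) by (unfold cO; nra).
      apply Rle_trans with (Ke * INR H * (8 * Bc ^ 2 / (INR s * INR s))).
      - apply Rmult_le_compat; try lra. apply Rabs_pos.
      - unfold H. rewrite mult_INR. right. field. lra. }
    apply le_IZR. rewrite abs_IZR. lra.
Qed.
End Unit.

Fixpoint itseq (g : R -> O) (c : O -> R) (k : nat) : O :=
  match k with 0%nat => g 1 | S k' => g (c (itseq g c k')) end.

Lemma cO_mul p q r eta u v (HR : Rel p q r eta u v) x y :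
  cO u v (mulO p q r x y) = cO u v x * cO u v y.
Proof. unfold cO. rewrite (reC_mul p q r eta u v HR), (imC_mul p q r eta u v HR). ring. Qed.

Lemma mod_div_Z a b M : (0 < M)%Z -> (a mod M = b mod M)%Z -> (M | a - b)%Z.
Proof. intros HM E. apply Z.mod_divide; [lia|]. apply Z.cong_iff_0. exact E. Qed.

Lemma mix_lt X A b m : (X < A)%nat -> (b < m)%nat -> (X * m + b < A * m)%nat.
Proof. intros H1 H2. assert (S X * m <= A * m)%nat by (apply Nat.mul_le_mono_r; lia). simpl in H. lia. Qed.

Section Unit2.
Variables (p q r : Z) (eta u v : R).
Hypothesis HR : Rel p q r eta u v.
Hypothesis Hv : 0 < v.
Hypothesis HI : Indep eta.

Lemma adj_facts x :
  ev eta x * ev eta (adjO p q r x) = IZR (normO p q r x) /\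
  reC u v x * reC u v (adjO p q r x) - imC u v x * imC u v (adjO p q r x) = IZR (normO p q r x) /\
  reC u v x * imC u v (adjO p q r x) + imC u v x * reC u v (adjO p q r x) = 0 /\
  cO u v x * cO u v (adjO p q r x) = IZR (normO p q r x) ^ 2.
Proof.
  pose proof (mul_adj p q r x) as E.
  split; [|split; [|split]].
  - rewrite <- (ev_mul p q r eta u v HR), E. unfold ev; simpl. ring.
  - rewrite <- (reC_mul p q r eta u v HR), E. unfold reC; simpl. ring.
  - rewrite <- (imC_mul p q r eta u v HR), E. unfold imC; simpl. ring.
  - rewrite <- (cO_mul p q r eta u v HR), E. unfold cO, reC, imC; simpl. ring.
Qed.

Lemma unit_exists : exists e : O, 1 < ev eta e /\ ev eta e * cO u v e = 1.
Proof.
  destruct (dirichlet p q r eta u v HR) as [C0 HD].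
  assert (Hex : forall rho, exists x, 0 < rho ->
     x <> mkO 0 0 0 /\ cO u v x < rho /\ (Z.abs (normO p q r x) <= C0)%Z).
  { intro rho. destruct (Rlt_or_le 0 rho) as [H|H].
    - destruct (HD rho H) as [x Hx]. exists x. auto.
    - exists (mkO 0 0 0). intro; lra. }
  set (g := fun rho => proj1_sig (constructive_indefinite_description _ (Hex rho))).
  assert (Hg : forall rho, 0 < rho -> g rho <> mkO 0 0 0 /\ cO u v (g rho) < rho /\
             (Z.abs (normO p q r (g rho)) <= C0)%Z).
  { intros rho H. unfold g. destruct (constructive_indefinite_description _ (Hex rho)) as [x Hx]. simpl. auto. }
  set (xs := itseq g (cO u v)).
  assert (Hxs : forall k, xs k <> mkO 0 0 0 /\ (Z.abs (normO p q r (xs k)) <= C0)%Z /\ 0 < cO u v (xs k)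
            /\ cO u v (xs (S k)) < cO u v (xs k)).
  { induction k as [|k IH].
    - destruct (Hg 1 ltac:(lra)) as [A1 [A2 A3]].
      assert (P1 := cO_pos p q r eta u v HR Hv HI _ A1).
      destruct (Hg (cO u v (g 1)) P1) as [_ [B2 _]].
      simpl. auto.
    - destruct IH as [_ [_ [I3 I4]]].
      destruct (Hg (cO u v (xs k)) I3) as [A1 [A2 A3]].
      assert (P1 := cO_pos p q r eta u v HR Hv HI _ A1).
      destruct (Hg (cO u v (g (cO u v (xs k)))) P1) as [_ [B2 _]].
      change (xs (S k)) with (g (cO u v (xs k))). change (xs (S (S k))) with (g (cO u v (g (cO u v (xs k))))).
      auto. }
  assert (Hdec : forall i j, (i < j)%nat -> cO u v (xs j) < cO u v (xs i)).
  { intros i j Hij. induction Hij.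
    - apply Hxs.
    - destruct (Hxs m) as [_ [_ [_ H4]]]. lra. }
  assert (HC0 : (0 <= C0)%Z) by (destruct (Hxs 0%nat) as [_ [H _]]; lia).
  set (Mf := Z.of_nat (fact (Z.to_nat C0))).
  assert (HMf : (0 < Mf)%Z) by (unfold Mf; pose proof (fact_pos (Z.to_nat C0)); lia).
  set (mf := Z.to_nat Mf).
  set (NB := Z.to_nat (2 * C0 + 1)).
  set (Nkey := fun k => Z.to_nat (normO p q r (xs k) + C0)).
  set (res := fun (f : O -> Z) k => Z.to_nat (f (xs k) mod Mf)).
  set (key := fun k => (((Nkey k * mf + res o0 k) * mf + res o1 k) * mf + res o2 k)%nat).
  set (n := (NB * mf * mf * mf)%nat).
  assert (Hres : forall f k, (res f k < mf)%nat).
  { intros f k. unfold res, mf. pose proof (Z.mod_pos_bound (f (xs k)) Mf HMf). lia. }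
  assert (HNk : forall k, (Nkey k < NB)%nat).
  { intros k. unfold Nkey, NB. destruct (Hxs k) as [_ [H _]]. lia. }
  destruct (php n key) as [i [j [Hij Hkey]]].
  { intros k _. unfold key, n. pose proof (Hres o0 k). pose proof (Hres o1 k). pose proof (Hres o2 k).
    pose proof (HNk k). repeat apply mix_lt; auto. }
  unfold key in Hkey.
  apply pair_inj in Hkey; [|apply Hres|apply Hres]. destruct Hkey as [Hkey E2].
  apply pair_inj in Hkey; [|apply Hres|apply Hres]. destruct Hkey as [Hkey E1].
  apply pair_inj in Hkey; [|apply Hres|apply Hres]. destruct Hkey as [EN E0].
  destruct (Hxs i) as [Xi1 [Xi2 [Xi3 _]]]. destruct (Hxs j) as [Xj1 [Xj2 [Xj3 _]]].
  unfold Nkey in EN. apply Z2Nat.inj in EN; [|lia|lia].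
  set (m0 := normO p q r (xs j)).
  assert (Em : normO p q r (xs i) = m0) by (unfold m0; lia).
  assert (Hm0 : m0 <> 0%Z) by (apply (norm_nz p q r eta u v HR Hv HI); auto).
  assert (Hdiv : (m0 | Mf)%Z).
  { apply Z.divide_abs_l. destruct (fact_div (Z.to_nat C0) (Z.to_nat (Z.abs m0))) as [w Hw].
    { unfold m0 in *. lia. }
    exists (Z.of_nat w). unfold Mf. rewrite Hw, Nat2Z.inj_mul, Z2Nat.id; lia. }
  assert (Hco : forall f, (res f i = res f j)%nat -> exists zf, (f (xs i) - f (xs j) = zf * m0)%Z).
  { intros f Ef. unfold res in Ef. pose proof (Z.mod_pos_bound (f (xs i)) Mf HMf).
    pose proof (Z.mod_pos_bound (f (xs j)) Mf HMf).
    apply Z2Nat.inj in Ef; [|lia|lia]. apply mod_div_Z in Ef; [|exact HMf].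
    exact (Z.divide_trans _ _ _ Hdiv Ef). }
  destruct (Hco o0 E0) as [z0 Z0]. destruct (Hco o1 E1) as [z1 Z1]. destruct (Hco o2 E2) as [z2 Z2].
  set (x := xs j). set (y := xs i). set (z := mkO z0 z1 z2).
  fold x y in Z0, Z1, Z2, Xi3, Xj3. fold x in m0.
  set (a := adjO p q r x).
  set (w := mulO p q r z a).
  set (eps := mkO (1 + o0 w) (o1 w) (o2 w)).
  destruct (adj_facts x) as [F1 [F2 [F3 _]]]. fold a m0 in F1, F2, F3.
  assert (Ry : ev eta y = ev eta x + IZR m0 * ev eta z /\ reC u v y = reC u v x + IZR m0 * reC u v z
             /\ imC u v y = imC u v x + IZR m0 * imC u v z).
  { assert (H0 : IZR (o0 y) = IZR (o0 x) + IZR z0 * IZR m0) by (rewrite <- mult_IZR, <- plus_IZR; f_equal; lia).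
    assert (H1 : IZR (o1 y) = IZR (o1 x) + IZR z1 * IZR m0) by (rewrite <- mult_IZR, <- plus_IZR; f_equal; lia).
    assert (H2 : IZR (o2 y) = IZR (o2 x) + IZR z2 * IZR m0) by (rewrite <- mult_IZR, <- plus_IZR; f_equal; lia).
    unfold ev, reC, imC. rewrite H0, H1, H2. unfold z; simpl. repeat split; ring. }
  destruct Ry as [Ry1 [Ry2 Ry3]].
  assert (Weps : ev eta eps = 1 + ev eta z * ev eta a /\
                 reC u v eps = 1 + (reC u v z * reC u v a - imC u v z * imC u v a) /\
                 imC u v eps = reC u v z * imC u v a + imC u v z * reC u v a).
  { rewrite <- (ev_mul p q r eta u v HR), <- (reC_mul p q r eta u v HR), <- (imC_mul p q r eta u v HR).
    fold w. unfold eps, ev, reC, imC; cbn [o0 o1 o2]. rewrite plus_IZR. repeat split; ring. }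
  destruct Weps as [W1 [W2 W3]].
  assert (Hev : ev eta eps * ev eta x = ev eta y).
  { rewrite W1, Ry1. transitivity (ev eta x + ev eta z * (ev eta x * ev eta a)); [ring|]. rewrite F1. ring. }
  assert (Hre : reC u v eps * reC u v x - imC u v eps * imC u v x = reC u v y).
  { rewrite W2, W3, Ry2.
    transitivity (reC u v x + reC u v z * (reC u v x * reC u v a - imC u v x * imC u v a)
       - imC u v z * (reC u v x * imC u v a + imC u v x * reC u v a)); [ring|]. rewrite F2, F3. ring. }
  assert (Him : reC u v eps * imC u v x + imC u v eps * reC u v x = imC u v y).
  { rewrite W2, W3, Ry3.
    transitivity (imC u v x + reC u v z * (reC u v x * imC u v a + imC u v x * reC u v a)
       + imC u v z * (reC u v x * reC u v a - imC u v x * imC u v a)); [ring|]. rewrite F2, F3. ring. }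
  assert (Hc : cO u v eps * cO u v x = cO u v y).
  { unfold cO at 3. rewrite <- Hre, <- Him. unfold cO. ring. }
  assert (Nx := norm_eq p q r eta u v HR x). assert (Ny := norm_eq p q r eta u v HR y).
  fold (cO u v x) in Nx. fold (cO u v y) in Ny. fold m0 in Nx. unfold y in Ny. rewrite Em in Ny. fold y in Ny.
  assert (Hcxy : cO u v x < cO u v y) by (apply Hdec; lia).
  assert (Hevx : ev eta x <> 0).
  { intro E. rewrite E in Nx. apply Hm0, eq_IZR. lra. }
  assert (Hce : cO u v eps = cO u v y / cO u v x) by (rewrite <- Hc; field; lra).
  assert (Hee : ev eta eps = cO u v x / cO u v y).
  { apply Rmult_eq_reg_r with (ev eta x * cO u v y); [|apply Rmult_integral_contrapositive; split; lra].
    transitivity (ev eta y * cO u v y); [rewrite <- Hev; ring|]. rewrite <- Ny, Nx. field. lra. }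
  assert (Hne : ev eta eps * cO u v eps = 1) by (rewrite Hce, Hee; field; lra).
  assert (He0 : 0 < ev eta eps) by (rewrite Hee; apply Rdiv_lt_0_compat; lra).
  assert (He1 : ev eta eps < 1).
  { rewrite Hee. apply Rmult_lt_reg_r with (cO u v y); [lra|]. unfold Rdiv. rewrite Rmult_assoc, Rinv_l; lra. }
  exists (adjO p q r eps).
  destruct (adj_facts eps) as [G1 [_ [_ G4]]].
  rewrite (norm_eq p q r eta u v HR eps) in G1, G4. fold (cO u v eps) in G1, G4.
  rewrite Hne in G1, G4.
  assert (Hce0 : 0 < cO u v eps) by (rewrite Hce; apply Rdiv_lt_0_compat; lra).
  assert (A1 : ev eta (adjO p q r eps) = / ev eta eps).
  { apply Rmult_eq_reg_l with (ev eta eps); [|lra]. rewrite G1. field. lra. }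
  assert (A2 : cO u v (adjO p q r eps) = / cO u v eps).
  { apply Rmult_eq_reg_l with (cO u v eps); [|lra]. rewrite G4. field. lra. }
  split.
  - rewrite A1. rewrite <- Rinv_1. apply Rinv_lt_contravar; lra.
  - rewrite A1, A2, <- Rinv_mult, Hne. apply Rinv_1.
Qed.
End Unit2.

Lemma abs_sin_le x : Rabs (sin x) <= Rabs x.
Proof.
  assert (Hpi : 1 < PI / 2) by apply PI2_1.
  assert (Hpos : forall y, 0 < y -> Rabs (sin y) <= y).
  { intros y Hy. pose proof (sin_lt_x y Hy). pose proof (SIN_bound y).
    destruct (Rlt_or_le y 1).
    - assert (0 <= sin y) by (apply sin_ge_0; lra). rewrite Rabs_right; lra.
    - apply Rabs_le. lra. }
  destruct (Rtotal_order x 0) as [H|[H|H]].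
  - assert (Hp := Hpos (-x) ltac:(lra)). rewrite sin_neg, Rabs_Ropp in Hp. rewrite (Rabs_left x) by lra. lra.
  - subst. rewrite sin_0. lra.
  - rewrite (Rabs_right x) by lra. apply Hpos; lra.
Qed.

Lemma polar A B : exists phi, A = sqrt (A ^ 2 + B ^ 2) * cos phi /\ B = sqrt (A ^ 2 + B ^ 2) * sin phi.
Proof.
  set (R := sqrt (A ^ 2 + B ^ 2)).
  assert (HR2 : R * R = A ^ 2 + B ^ 2) by (apply sqrt_sqrt; nra).
  assert (HR0 : 0 <= R) by apply sqrt_pos.
  destruct (Req_dec R 0) as [E|E].
  - exists 0. assert (A = 0) by nra. assert (B = 0) by nra. subst. rewrite E. lra.
  - assert (HRp : 0 < R) by lra.
    set (x := A / R).
    assert (Hx : -1 <= x <= 1).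
    { unfold x. split.
      - apply Rmult_le_reg_r with R; [lra|]. unfold Rdiv. rewrite Rmult_assoc, Rinv_l; nra.
      - apply Rmult_le_reg_r with R; [lra|]. unfold Rdiv. rewrite Rmult_assoc, Rinv_l; nra. }
    assert (Hs : sqrt (1 - x²) = Rabs B / R).
    { replace (1 - x²) with (Rsqr (B / R)).
      - rewrite sqrt_Rsqr_abs. unfold Rdiv. rewrite Rabs_mult, Rabs_inv, (Rabs_right R); lra.
      - unfold Rsqr, x. apply Rmult_eq_reg_r with (R * R); [|nra]. field_simplify; try lra. }
    destruct (Rle_or_lt 0 B) as [HB|HB].
    + exists (acos x). rewrite cos_acos, sin_acos by exact Hx. rewrite Hs, Rabs_right by lra.
      unfold x. fold R. split; field; lra.
    + exists (- acos x). rewrite cos_neg, sin_neg, cos_acos, sin_acos by exact Hx. rewrite Hs, Rabs_left by lra.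
      unfold x. fold R. split; field; lra.
Qed.

Lemma cos_shift_abs (m : Z) y : Rabs (cos (IZR m * PI + y)) = Rabs (cos y).
Proof.
  rewrite cos_plus. rewrite (sin_eq_0_1 (IZR m * PI)) by (exists m; reflexivity).
  assert (Hc : cos (IZR m * PI) ^ 2 = 1).
  { pose proof (sin2_cos2 (IZR m * PI)). rewrite (sin_eq_0_1 (IZR m * PI)) in H by (exists m; reflexivity).
    unfold Rsqr in H. lra. }
  replace (cos (IZR m * PI) * cos y - 0 * sin y) with (cos (IZR m * PI) * cos y) by ring.
  rewrite Rabs_mult. replace (Rabs (cos (IZR m * PI))) with 1; [ring|].
  rewrite <- (Rabs_R1). rewrite <- pow2_abs in Hc.
  pose proof (Rabs_pos (cos (IZR m * PI))). rewrite Rabs_R1. nra.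
Qed.

Lemma approx_mult e1 T (N0 : nat) : 0 < e1 <= 1 ->
  exists (J : nat) (L : Z), (N0 <= J)%nat /\ Rabs (INR J * e1 - T - IZR L) <= e1.
Proof.
  intros He.
  set (L := up (Rabs T + INR N0)).
  destruct (archimed (Rabs T + INR N0)) as [HL1 _]. fold L in HL1.
  set (y := (T + IZR L) / e1).
  assert (Hy : INR N0 <= y).
  { unfold y. pose proof (Rle_abs (-T)). rewrite Rabs_Ropp in H.
    apply Rmult_le_reg_r with e1; [lra|]. unfold Rdiv. rewrite Rmult_assoc, Rinv_l by lra.
    pose proof (pos_INR N0). nra. }
  destruct (archimed y) as [H1 H2].
  assert (Hup : (0 <= up y)%Z) by (apply le_IZR; pose proof (pos_INR N0); lra).
  exists (Z.to_nat (up y)), L. split.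
  - apply INR_le. rewrite (INR_IZR_INZ (Z.to_nat _)), Z2Nat.id by exact Hup. lra.
  - rewrite (INR_IZR_INZ (Z.to_nat _)), Z2Nat.id by exact Hup.
    assert (E : T + IZR L = y * e1) by (unfold y; field; lra).
    apply Rabs_le. split; nra.
Qed.

Lemma density phi : (forall k : nat, (1 <= k)%nat -> sin (INR k * phi) <> 0) ->
  forall chi delta (N0 : nat), 0 < delta ->
  exists n : nat, (N0 <= n)%nat /\ Rabs (cos (INR n * phi - chi)) <= delta.
Proof.
  intros Hirr chi delta N0 Hd.
  pose proof PI_RGT_0 as Hpi.
  set (M := S (Z.to_nat (up (PI / delta)))).
  assert (HM : PI / delta < INR M).
  { destruct (archimed (PI / delta)) as [H1 _]. unfold M. rewrite S_INR, INR_IZR_INZ, Z2Nat.id; [lra|].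
    apply le_IZR. assert (0 < PI / delta) by (apply Rdiv_lt_0_compat; lra). lra. }
  assert (HM1 : 1 <= INR M) by (apply (le_INR 1); unfold M; lia).
  set (t := fun i : nat => INR i * phi / PI).
  set (fr := fun x => x - IZR (Int_part x)).
  assert (Hfr : forall x, 0 <= fr x < 1).
  { intro x. unfold fr. destruct (base_Int_part x). lra. }
  set (bin := fun i => Z.to_nat (Int_part (INR M * fr (t i)))).
  destruct (php M bin) as [i [j [Hij Hb]]].
  { intros k _. unfold bin. destruct (Hfr (t k)) as [F1 F2].
    destruct (base_Int_part (INR M * fr (t k))) as [B1 B2].
    assert (IZR (Int_part (INR M * fr (t k))) < INR M) by nra.
    set (X := Int_part (INR M * fr (t k))) in *. rewrite INR_IZR_INZ in H. apply lt_IZR in H. lia. }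
  unfold bin in Hb.
  assert (Hnn : forall k, (0 <= Int_part (INR M * fr (t k)))%Z).
  { intro k. destruct (Hfr (t k)). destruct (base_Int_part (INR M * fr (t k))).
    assert (IZR (Int_part (INR M * fr (t k))) > -1) by nra. apply lt_IZR in H3. lia. }
  apply Z2Nat.inj in Hb; [|apply Hnn|apply Hnn].
  apply Int_part_close in Hb.
  set (e0 := fr (t j) - fr (t i)).
  assert (He0 : Rabs e0 < 1 / INR M).
  { unfold e0. replace (INR M * fr (t i) - INR M * fr (t j)) with (- (INR M * (fr (t j) - fr (t i)))) in Hb by ring.
    rewrite Rabs_Ropp, Rabs_mult, Rabs_right in Hb by lra.
    apply Rmult_lt_reg_l with (INR M); [lra|]. field_simplify; lra. }
  set (d := (j - i)%nat).
  set (k := (Int_part (t j) - Int_part (t i))%Z).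
  assert (Hd1 : (1 <= d)%nat) by (unfold d; lia).
  assert (Hdt : INR d * phi = PI * (IZR k + e0)).
  { unfold d, k, e0, fr, t. rewrite minus_INR by lia. rewrite minus_IZR. field. lra. }
  assert (He0nz : e0 <> 0).
  { intro E. apply (Hirr d Hd1). apply sin_eq_0_1. exists k. rewrite Hdt, E. ring. }
  set (T := chi / PI + / 2).
  assert (Hmain : exists (J : nat) (L : Z), (N0 <= J)%nat /\ Rabs (INR J * e0 - T - IZR L) <= Rabs e0).
  { assert (Hae : Rabs e0 <= 1).
    { assert (1 / INR M <= 1) by (apply Rmult_le_reg_r with (INR M); [lra|]; field_simplify; lra). lra. }
    destruct (Rlt_or_le 0 e0) as [Hp|Hn].
    - rewrite Rabs_right in * by lra. apply approx_mult. lra.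
    - assert (e0 < 0) by (destruct Hn; [auto|contradiction]).
      rewrite Rabs_left in * by lra.
      destruct (approx_mult (- e0) (- T) N0 ltac:(lra)) as [J [L [HJ HL]]].
      exists J, (- L)%Z. split; [exact HJ|]. rewrite opp_IZR.
      replace (INR J * e0 - T - - IZR L) with (- (INR J * - e0 - - T - IZR L)) by ring.
      rewrite Rabs_Ropp. exact HL. }
  destruct Hmain as [J [L [HJ HL]]].
  exists (J * d)%nat. split.
  - assert (J <= J * d)%nat by nia. lia.
  - set (err := INR J * e0 - T - IZR L).
    replace (INR (J * d) * phi - chi) with (IZR (Z.of_nat J * k + L) * PI + (PI / 2 + PI * err)).
    2:{ rewrite mult_INR, Rmult_assoc, Hdt. unfold err, T. rewrite plus_IZR, mult_IZR, <- INR_IZR_INZ. field. lra. }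
    rewrite cos_shift_abs.
    replace (cos (PI / 2 + PI * err)) with (- sin (PI * err)) by (rewrite sin_cos; ring).
    rewrite Rabs_Ropp. eapply Rle_trans; [apply abs_sin_le|].
    rewrite Rabs_mult, (Rabs_right PI) by lra.
    assert (PI * Rabs e0 <= delta).
    { assert (PI * (1 / INR M) < delta).
      { replace (PI * (1 / INR M)) with ((PI / delta) * (delta / INR M)) by (field; lra).
        apply Rlt_le_trans with (INR M * (delta / INR M)).
        - apply Rmult_lt_compat_r; [apply Rdiv_lt_0_compat; lra| exact HM].
        - right. field. lra. }
      nra. }
    apply Rle_trans with (PI * Rabs e0); [apply Rmult_le_compat_l; [lra|exact HL]|lra].
Qed.

Lemma dist_nint_le x (k : Z) : dist_nint x <= Rabs (x - IZR k).
Proof.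
  unfold dist_nint. destruct (base_Int_part x) as [H1 H2].
  destruct (Z_le_gt_dec k (Int_part x)) as [Hk|Hk].
  - apply IZR_le in Hk. rewrite Rabs_right by lra. eapply Rle_trans; [apply Rmin_l|]. lra.
  - assert (Hk' : (Int_part x + 1 <= k)%Z) by lia. apply IZR_le in Hk'. rewrite plus_IZR in Hk'.
    rewrite Rabs_left1 by lra. eapply Rle_trans; [apply Rmin_r|]. lra.
Qed.

Lemma dist_nint_pos x : 0 <= dist_nint x.
Proof.
  unfold dist_nint. destruct (base_Int_part x) as [H1 H2].
  apply Rmin_glb; lra.
Qed.

Fixpoint powO (p q r : Z) (e : O) (n : nat) : O :=
  match n with 0%nat => mkO 1 0 0 | S n' => mulO p q r e (powO p q r e n') end.

Lemma bernoulli E n : 1 < E -> 1 + INR n * (E - 1) <= E ^ n.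
Proof.
  intro HE. induction n as [|n IH]; [simpl; lra|]. rewrite S_INR. change (E ^ S n) with (E * E ^ n).
  assert (0 <= INR n) by apply pos_INR.
  assert (E * (1 + INR n * (E - 1)) <= E * E ^ n) by (apply Rmult_le_compat_l; lra).
  assert (0 <= INR n * (E - 1) * (E - 1)) by (apply Rmult_le_pos; [apply Rmult_le_pos|]; lra). nra.
Qed.

Lemma pow_le1 x n : 0 <= x <= 1 -> x ^ n <= 1.
Proof. intro H. induction n; simpl; [lra|]. pose proof (pow_le x n (proj1 H)). nra. Qed.

Section Main.
Variables (p q r : Z) (eta u v : R).
Hypothesis HR : Rel p q r eta u v.
Variable e : O.
Variable phi : R.
Hypothesis HE : 1 < ev eta e.
Hypothesis HN : ev eta e * cO u v e = 1.
Hypothesis Hre : reC u v e = sqrt (cO u v e) * cos phi.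
Hypothesis Him : imC u v e = sqrt (cO u v e) * sin phi.

Definition Ev := ev eta e.
Definition rho := sqrt (cO u v e).

Lemma rho_facts : 0 <= rho /\ rho ^ 2 * Ev = 1 /\ rho < 1.
Proof.
  unfold rho, Ev. assert (Hc : 0 <= cO u v e) by (unfold cO; nra).
  assert (Hs : sqrt (cO u v e) ^ 2 = cO u v e) by (rewrite <- Rsqr_pow2; apply Rsqr_sqrt; lra).
  pose proof (sqrt_pos (cO u v e)).
  split; [lra|split].
  - rewrite Hs. lra.
  - assert (cO u v e < 1) by nra. nra.
Qed.

Lemma pow_facts n : ev eta (powO p q r e n) = Ev ^ n /\
   reC u v (powO p q r e n) = rho ^ n * cos (INR n * phi) /\
   imC u v (powO p q r e n) = rho ^ n * sin (INR n * phi).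
Proof.
  induction n as [|n [I1 [I2 I3]]].
  - unfold powO, ev, reC, imC; cbn [o0 o1 o2]. change (INR 0) with 0. rewrite !Rmult_0_l, cos_0, sin_0. repeat split; ring.
  - simpl powO. rewrite (ev_mul p q r eta u v HR), (reC_mul p q r eta u v HR), (imC_mul p q r eta u v HR).
    rewrite I1, I2, I3, Hre, Him. fold rho. fold Ev.
    rewrite S_INR. replace ((INR n + 1) * phi) with (phi + INR n * phi) by ring.
    rewrite cos_plus, sin_plus. simpl. repeat split; ring.
Qed.

Lemma approx (g : O) (n : nat) : exists k : Z,
  IZR (trO p q (powO p q r e n)) * ev eta g - IZR k =
  2 * rho ^ n * ((ev eta g - reC u v g) * cos (INR n * phi) + imC u v g * sin (INR n * phi)).
Proof.
  exists (trO p q (mulO p q r g (powO p q r e n))).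
  rewrite !(tr_eq p q r eta u v HR), (ev_mul p q r eta u v HR), (reC_mul p q r eta u v HR).
  destruct (pow_facts n) as [P1 [P2 P3]]. rewrite P2, P3. ring.
Qed.

Lemma tr_close n : Rabs (IZR (trO p q (powO p q r e n)) - Ev ^ n) <= 2.
Proof.
  rewrite (tr_eq p q r eta u v HR). destruct (pow_facts n) as [P1 [P2 _]]. rewrite P1, P2.
  destruct rho_facts as [R0 [_ R2]].
  assert (rho ^ n <= 1) by (apply pow_le1; lra).
  pose proof (pow_le rho n R0). pose proof (COS_bound (INR n * phi)).
  assert (0 <= rho ^ n * (1 - cos (INR n * phi))) by (apply Rmult_le_pos; lra).
  assert (0 <= rho ^ n * (1 + cos (INR n * phi))) by (apply Rmult_le_pos; lra).
  apply Rabs_le. split; nra.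
Qed.
Lemma lin_bound A B x : Rabs (A * cos x + B * sin x) <= Rabs A + Rabs B.
Proof.
  eapply Rle_trans; [apply Rabs_triang|]. rewrite !Rabs_mult.
  pose proof (Rabs_pos A). pose proof (Rabs_pos B).
  assert (Rabs (cos x) <= 1) by (apply Rabs_le; apply COS_bound).
  assert (Rabs (sin x) <= 1) by (apply Rabs_le; apply SIN_bound).
  assert (Rabs A * Rabs (cos x) <= Rabs A) by (rewrite <- (Rmult_1_r (Rabs A)) at 2; apply Rmult_le_compat_l; lra).
  assert (Rabs B * Rabs (sin x) <= Rabs B) by (rewrite <- (Rmult_1_r (Rabs B)) at 2; apply Rmult_le_compat_l; lra).
  lra.
Qed.

Lemma bound_term alpha beta (D : positive) gA gB (HA : IZR (Z.pos D) * alpha = ev eta gA)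
  (HB : IZR (Z.pos D) * beta = ev eta gB) (RA chi : R)
  (HcA : ev eta gA - reC u v gA = RA * cos chi) (HsA : imC u v gA = RA * sin chi) (n : nat)
  (Ht : 0 <= IZR (trO p q (powO p q r e n))) :
  let Q := IZR (Z.pos D) * IZR (trO p q (powO p q r e n)) in
  Q * dist_nint (Q * alpha) * dist_nint (Q * beta) <=
  12 * IZR (Z.pos D) * Rabs RA * (Rabs (ev eta gB - reC u v gB) + Rabs (imC u v gB)) * Rabs (cos (INR n * phi - chi)).
Proof.
  intro Q. set (t := IZR (trO p q (powO p q r e n))) in *.
  destruct rho_facts as [R0 [R1 R2]].
  assert (HD : 0 < IZR (Z.pos D)) by (apply IZR_lt; lia).
  destruct (approx gA n) as [kA EA]. destruct (approx gB n) as [kB EB]. fold t in EA, EB.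
  assert (DA : dist_nint (Q * alpha) <= 2 * rho ^ n * (Rabs RA * Rabs (cos (INR n * phi - chi)))).
  { eapply Rle_trans; [apply (dist_nint_le _ kA)|].
    replace (Q * alpha) with (t * ev eta gA) by (unfold Q; rewrite <- HA; ring). rewrite EA.
    rewrite HcA, HsA. rewrite cos_minus.
    replace (RA * cos chi * cos (INR n * phi) + RA * sin chi * sin (INR n * phi)) with
       (RA * (cos (INR n * phi) * cos chi + sin (INR n * phi) * sin chi)) by ring.
    rewrite !Rabs_mult, (Rabs_right 2), (Rabs_right (rho ^ n)) by (try apply Rle_ge, pow_le; lra). lra. }
  assert (DB : dist_nint (Q * beta) <= 2 * rho ^ n * (Rabs (ev eta gB - reC u v gB) + Rabs (imC u v gB))).
  { eapply Rle_trans; [apply (dist_nint_le _ kB)|].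
    replace (Q * beta) with (t * ev eta gB) by (unfold Q; rewrite <- HB; ring). rewrite EB.
    rewrite Rabs_mult, Rabs_mult, (Rabs_right 2), (Rabs_right (rho ^ n)) by (try apply Rle_ge, pow_le; lra).
    pose proof (lin_bound (ev eta gB - reC u v gB) (imC u v gB) (INR n * phi)).
    pose proof (pow_le rho n R0). nra. }
  assert (HQ : 0 <= Q <= IZR (Z.pos D) * (Ev ^ n + 2)).
  { pose proof (tr_close n). fold t in H. apply abs_le_inv in H. unfold Q. split; [nra|].
    apply Rmult_le_compat_l; lra. }
  pose proof (dist_nint_pos (Q * alpha)). pose proof (dist_nint_pos (Q * beta)).
  set (SB := Rabs (ev eta gB - reC u v gB) + Rabs (imC u v gB)) in *.
  set (c := Rabs (cos (INR n * phi - chi))) in *.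
  assert (HSB : 0 <= SB) by (unfold SB; pose proof (Rabs_pos (ev eta gB - reC u v gB)); pose proof (Rabs_pos (imC u v gB)); lra).
  assert (Hc : 0 <= c) by apply Rabs_pos.
  pose proof (Rabs_pos RA).
  assert (Hrn : 0 <= rho ^ n) by (apply pow_le; lra).
  apply Rle_trans with (IZR (Z.pos D) * (Ev ^ n + 2) * (2 * rho ^ n * (Rabs RA * c)) * (2 * rho ^ n * SB)).
  { apply Rmult_le_compat; try (apply Rmult_le_pos); try lra.
    apply Rmult_le_compat; lra. }
  assert (Hpow : Ev ^ n * (rho ^ n * rho ^ n) = 1).
  { rewrite <- Rpow_mult_distr, <- Rpow_mult_distr. replace (Ev * (rho * rho)) with (rho ^ 2 * Ev) by ring.
    rewrite R1. apply pow1. }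
  assert (Hr2 : rho ^ n * rho ^ n <= 1).
  { rewrite <- Rpow_mult_distr. apply pow_le1. nra. }
  replace (IZR (Z.pos D) * (Ev ^ n + 2) * (2 * rho ^ n * (Rabs RA * c)) * (2 * rho ^ n * SB)) with
     (4 * IZR (Z.pos D) * Rabs RA * SB * c * (Ev ^ n * (rho ^ n * rho ^ n) + 2 * (rho ^ n * rho ^ n))) by ring.
  rewrite Hpow.
  assert (0 <= 4 * IZR (Z.pos D) * Rabs RA * SB * c).
  { repeat apply Rmult_le_pos; lra. }
  replace (12 * IZR (Z.pos D) * Rabs RA * SB * c) with (4 * IZR (Z.pos D) * Rabs RA * SB * c * 3) by ring.
  apply Rmult_le_compat_l; lra.
Qed.
End Main.

Definition scaleO (c : Z) (g : O) := mkO (c * o0 g) (c * o1 g) (c * o2 g).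

Lemma ev_scale eta c g : ev eta (scaleO c g) = IZR c * ev eta g.
Proof. unfold ev, scaleO; cbn [o0 o1 o2]. rewrite !mult_IZR. ring. Qed.

Fixpoint selseq (sel : nat -> R -> nat) (f : nat -> R) (k : nat) : nat :=
  match k with 0%nat => sel 0%nat 4 | S k' => sel (S k') (f (selseq sel f k') + 4) end.

Theorem mainTheorem4 (theta : R) (a b c : Q)
  (Hmin : cubic_min_poly theta a b c)
  (Hone : only_real_root theta a b c)
  (alpha beta : R)
  (Ha : in_Q_theta3 theta alpha) (Hb : in_Q_theta3 theta beta) :
  exists psi : nat -> nat,
    (forall n, (0 < psi n)%nat) /\
    (forall n, (psi n < psi (S n))%nat) /\
    Un_cv (fun n => INR (psi n) * dist_nint (INR (psi n) * alpha)
                               * dist_nint (INR (psi n) * beta)) 0.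
Proof.
  destruct (setup theta a b c Hmin Hone) as [d [p [q [r [u [v [HR [Hv HI]]]]]]]].
  set (eta := IZR (Z.pos d) * theta) in *.
  destruct (unit_exists p q r eta u v HR Hv HI) as [e [HE HN]].
  destruct (polar (reC u v e) (imC u v e)) as [phi [Hre Him]].
  fold (cO u v e) in Hre, Him.
  assert (Hirr : forall k : nat, (1 <= k)%nat -> sin (INR k * phi) <> 0).
  { intros k Hk Hs. destruct (pow_facts p q r eta u v HR e phi Hre Him k) as [P1 [P2 P3]].
    rewrite Hs, Rmult_0_r in P3. destruct (imC_zero p q r eta u v HR Hv HI _ P3) as [Z1 Z2].
    destruct (rho_facts eta u v e HE HN) as [R0 [R1 R2]].
    assert (Hev : ev eta (powO p q r e k) = reC u v (powO p q r e k)).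
    { unfold ev, reC. rewrite Z1, Z2. ring. }
    rewrite P1, P2 in Hev.
    assert (rho u v e ^ k <= 1) by (apply pow_le1; lra).
    assert (1 < Ev eta e ^ k) by (apply Rlt_pow_R1; [exact HE|lia]).
    pose proof (COS_bound (INR k * phi)). pose proof (pow_le (rho u v e) k R0).
    assert (0 <= rho u v e ^ k * (1 - cos (INR k * phi))) by (apply Rmult_le_pos; lra).
    lra. }
  destruct (denom theta d alpha Ha) as [DA [gA0 HA0]].
  destruct (denom theta d beta Hb) as [DB [gB0 HB0]].
  fold eta in HA0, HB0.
  set (D := (DA * DB)%positive).
  set (gA := scaleO (Z.pos DB) gA0). set (gB := scaleO (Z.pos DA) gB0).
  assert (HA : IZR (Z.pos D) * alpha = ev eta gA).
  { unfold gA, D. rewrite ev_scale, <- HA0, Pos2Z.inj_mul, mult_IZR. ring. }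
  assert (HB : IZR (Z.pos D) * beta = ev eta gB).
  { unfold gB, D. rewrite ev_scale, <- HB0, Pos2Z.inj_mul, mult_IZR. ring. }
  destruct (polar (ev eta gA - reC u v gA) (imC u v gA)) as [chi [HcA HsA]].
  set (RA := sqrt ((ev eta gA - reC u v gA) ^ 2 + imC u v gA ^ 2)) in *.
  set (SB := Rabs (ev eta gB - reC u v gB) + Rabs (imC u v gB)).
  set (Kc := 12 * IZR (Z.pos D) * Rabs RA * SB).
  assert (HDp : 0 < IZR (Z.pos D)) by (apply IZR_lt; lia).
  assert (HKc : 0 <= Kc).
  { unfold Kc, SB. pose proof (Rabs_pos RA). pose proof (Rabs_pos (ev eta gB - reC u v gB)).
    pose proof (Rabs_pos (imC u v gB)). repeat apply Rmult_le_pos; lra. }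
  set (K := Kc + 1).
  set (E := Ev eta e).
  assert (Hsel : forall (k : nat) (bnd : R), exists n : nat,
            bnd < E ^ n /\ Rabs (cos (INR n * phi - chi)) <= / (K * (INR k + 1))).
  { intros k bnd.
    set (N0 := Z.to_nat (up (Rabs bnd / (E - 1)))).
    assert (HEp : 0 < E - 1) by (unfold E, Ev; lra).
    assert (Hpos : 0 < / (K * (INR k + 1))).
    { apply Rinv_0_lt_compat. pose proof (pos_INR k). apply Rmult_lt_0_compat; unfold K; lra. }
    destruct (density phi Hirr chi _ N0 Hpos) as [n [Hn Hc]].
    exists n. split; [|exact Hc].
    pose proof (bernoulli E n ltac:(unfold E, Ev; lra)).
    destruct (archimed (Rabs bnd / (E - 1))) as [U _].
    assert (0 <= Rabs bnd / (E - 1)) by (apply Rmult_le_pos; [apply Rabs_pos| left; apply Rinv_0_lt_compat; lra]).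
    assert (HN0 : Rabs bnd / (E - 1) < INR n).
    { apply Rlt_le_trans with (INR N0); [|apply le_INR; exact Hn].
      unfold N0. rewrite INR_IZR_INZ, Z2Nat.id; [lra|]. apply le_IZR. lra. }
    assert (Rabs bnd < INR n * (E - 1)).
    { apply Rmult_lt_reg_r with (/ (E - 1)); [apply Rinv_0_lt_compat; lra|].
      rewrite Rmult_assoc, Rinv_r by lra. unfold Rdiv in HN0. lra. }
    pose proof (Rle_abs bnd). lra. }
  set (sel := fun k bnd => proj1_sig (constructive_indefinite_description _ (Hsel k bnd))).
  assert (Hsel' : forall k bnd, bnd < E ^ (sel k bnd) /\
            Rabs (cos (INR (sel k bnd) * phi - chi)) <= / (K * (INR k + 1))).
  { intros k bnd. unfold sel. destruct (constructive_indefinite_description _ (Hsel k bnd)) as [n Hn]. exact Hn. }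
  set (ns := selseq sel (fun n => E ^ n)).
  set (t := fun k => trO p q (powO p q r e (ns k))).
  assert (Hclose : forall k, Rabs (IZR (t k) - E ^ ns k) <= 2).
  { intro k. apply (tr_close p q r eta u v HR e phi HE HN Hre Him). }
  assert (Hgrow : forall k, E ^ ns k + 4 < E ^ ns (S k)).
  { intro k. change (ns (S k)) with (sel (S k) (E ^ ns k + 4)). apply Hsel'. }
  assert (Hfirst : 4 < E ^ ns 0%nat) by (apply Hsel').
  assert (Ht : forall k, 2 < IZR (t k)).
  { intro k. pose proof (Hclose k) as H. apply abs_le_inv in H.
    destruct k; [lra|]. pose proof (Hgrow k). assert (0 <= E ^ ns k) by (apply pow_le; unfold E, Ev; lra). lra. }
  assert (Htinc : forall k, (t k < t (S k))%Z).
  { intro k. apply lt_IZR. pose proof (Hclose k) as H1. pose proof (Hclose (S k)) as H2.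
    apply abs_le_inv in H1. apply abs_le_inv in H2. pose proof (Hgrow k). lra. }
  assert (Ht0 : forall k, (0 < t k)%Z) by (intro k; apply lt_IZR; pose proof (Ht k); lra).
  exists (fun k => Z.to_nat (Z.pos D * t k)).
  assert (HINR : forall k, INR (Z.to_nat (Z.pos D * t k)) = IZR (Z.pos D) * IZR (t k)).
  { intro k. rewrite INR_IZR_INZ, Z2Nat.id by (pose proof (Ht0 k); lia). apply mult_IZR. }
  split; [|split].
  - intro k. pose proof (Ht0 k). lia.
  - intro k. pose proof (Ht0 k). pose proof (Htinc k). nia.
  - intros eps Heps.
    destruct (archimed (/ eps)) as [U _].
    assert (Hie : 0 < / eps) by (apply Rinv_0_lt_compat; lra).
    exists (Z.to_nat (up (/ eps))). intros k Hk. unfold R_dist. rewrite Rminus_0_r.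
    rewrite HINR.
    assert (Hbt := bound_term p q r eta u v HR e phi HE HN Hre Him alpha beta D gA gB HA HB RA chi HcA HsA (ns k)
                   ltac:(fold (t k); pose proof (Ht k); lra)).
    cbv zeta in Hbt. fold (t k) in Hbt. fold SB in Hbt. fold Kc in Hbt.
    assert (Hcos := proj2 (Hsel' k (match k with 0%nat => 4 | S k' => E ^ ns k' + 4 end))).
    replace (sel k (match k with 0%nat => 4 | S k' => E ^ ns k' + 4 end)) with (ns k) in Hcos
      by (destruct k; reflexivity).
    set (Q := IZR (Z.pos D) * IZR (t k)) in *.
    assert (HQ : 0 <= Q) by (unfold Q; pose proof (Ht k); nra).
    pose proof (dist_nint_pos (Q * alpha)). pose proof (dist_nint_pos (Q * beta)).
    assert (Hx0 : 0 <= Q * dist_nint (Q * alpha) * dist_nint (Q * beta)) by (apply Rmult_le_pos; [apply Rmult_le_pos|]; assumption).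
    rewrite Rabs_right by lra.
    assert (HkR : / eps < INR k + 1).
    { assert (INR (Z.to_nat (up (/ eps))) <= INR k) by (apply le_INR; exact Hk).
      rewrite INR_IZR_INZ, Z2Nat.id in H1 by (apply le_IZR; lra). lra. }
    assert (Hk1 : 0 < INR k + 1) by (pose proof (pos_INR k); lra).
    assert (HK : 0 < K) by (unfold K; lra).
    apply Rle_lt_trans with (Kc * / (K * (INR k + 1))).
    + eapply Rle_trans; [exact Hbt|]. apply Rmult_le_compat_l; [exact HKc| exact Hcos].
    + apply Rle_lt_trans with (/ (INR k + 1)).
      * rewrite Rinv_mult. replace (/ (INR k + 1)) with (1 * / (INR k + 1)) at 2 by ring.
        rewrite <- Rmult_assoc. apply Rmult_le_compat_r; [left; apply Rinv_0_lt_compat; lra|].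
        apply Rmult_le_reg_r with K; [lra|]. rewrite Rmult_assoc, Rinv_l by lra. unfold K. lra.
      * rewrite <- (Rinv_inv eps). apply Rinv_lt_contravar; [nra| exact HkR].
Qed.
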